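(* Consider the two-evaluator model described in the context with $d=2$ attributes, fraction of disadvantaged applicants $\alpha=1/2$, and $\lambda=1/2$ (exactly one of the two attributes is protected). Then for every bias factor $\beta\in[0,1)$, every bias probability $\gamma\in(0,1)$, every even $n\ge 2$ and every continuous distribution $\mathcal D$ on $[0,\infty)$, segmented allocation incurs a top-1 error no larger than holistic allocation: $\mathrm{err}_{\mathrm{seg}}\le \mathrm{err}_{\mathrm{hol}}$.
   Context: Model. There are $n$ applicants (with $n$ even) and $d=2$ attributes. A fixed set $\mathcal I_D\subseteq[n]$ of $n/2$ applicants is ''disadvantaged''; the remaining set $\mathcal I_A=[n]\setminus\mathcal I_D$ is ''advantaged''. The two attributes of each applicant have identical true value: $x_{i1}=x_{i2}=:x_i$, where $x_1,\dots,x_n$ are i.i.d. from a continuous distribution $\mathcal D$ supported on $[0,\infty)$. A fraction $\lambda$ of the attributes are ''protected'' (for $d=2$: $\lambda=1/2$ means a specified one of the two attributes is protected, $\lambda=1$ means both are). There are two evaluators; each is independently ''biased'' with probability $\gamma$, independently of everything else. An unbiased evaluator assigned attribute $j$ of applicant $i$ reports $y_{ij}=x_{ij}$; a biased evaluator reports $y_{ij}=\beta x_{ij}$ if $j$ is protected and $i\in\mathcal I_D$, and $y_{ij}=x_{ij}$ otherwise, where $\beta\in[0,1)$. Each (applicant, attribute) pair is evaluated by exactly one evaluator. Holistic allocation: the applicants are split uniformly at random into two sets of size $n/2$, and each evaluator evaluates both attributes of the applicants in one set. Segmented allocation: uniformly at random, one evaluator evaluates attribute 1 of all applicants and the other evaluates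 attribute 2 of all applicants. Assignments are independent of the values and of which evaluators are biased. The top-1 error of an allocation scheme is $\mathrm{err}=\mathbb P\big(\arg\max_{i\in[n]} x_i\neq \arg\max_{i\in[n]}(y_{i1}+y_{i2})\big)$ under that scheme; $\mathrm{err}_{\mathrm{hol}}$ and $\mathrm{err}_{\mathrm{seg}}$ denote the errors under holistic and segmented allocation. *)

(* Defs.v *)
From HB Require Import structures.
From mathcomp Require Import all_boot all_order all_algebra.
From mathcomp Require Import all_classical all_reals all_analysis.
Set Implicit Arguments. Unset Strict Implicit. Unset Printing Implicit Defensive.
Import Order.TTheory GRing.Theory Num.Theory.
Local Open Scope classical_set_scope.
Local Open Scope ring_scope.

Section TwoEvaluators.
Variable R : realType.

(* Mutual independence of the n real random variables X_0..X_{n-1}: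
   product rule for every family of Borel sets (taking B i = setT recovers
   every subfamily). *)
Definition mutually_independent d (T : measurableType d) (P : probability T R)
  n (X : 'I_n -> {RV P >-> R}) : Prop :=
  forall B : 'I_n -> set R, (forall i, measurable (B i)) ->
    fine (P [set t | forall i, B i (X i t)]) =
    \prod_(i < n) fine (P (X i @^-1` B i)).

Definition has_law d (T : measurableType d) (P : probability T R)
  n (X : 'I_n -> {RV P >-> R}) (D : probability R R) : Prop :=
  forall i (B : set R), measurable B -> P (X i @^-1` B) = D B.

Definition continuous_nonneg_distribution (D : probability R R) : Prop :=
  (forall r : R, D [set r] = 0%E) /\ D [set r : R | 0 <= r] = 1%E.

Definition top1_correct n (x s : 'I_n -> R) : Prop :=
  exists i : 'I_n, (forall j, j != i -> x j < x i) /\ (forall j, j != i -> s j < s i).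

Variables (n : nat) (ID : {set 'I_n}) (beta gamma : R).

Definition wbias (b : bool) : R := if b then gamma else 1 - gamma.

(* Attribute 1 is the protected attribute, attribute 2 unprotected.
   y_i1 + y_i2 where y_i1 is reported by the evaluator whose bias flag is b. *)
Definition total_score (b : bool) (x : 'I_n -> R) (i : 'I_n) : R :=
  (if b && (i \in ID) then beta * x i else x i) + x i.

(* Holistic: evaluator 1 (bias flag b1) evaluates both attributes of the
   applicants in S, evaluator 2 (flag b2) those of the complement. *)
Definition score_hol (S : {set 'I_n}) (b1 b2 : bool) (x : 'I_n -> R) (i : 'I_n) : R :=
  total_score (if i \in S then b1 else b2) x i.

(* Segmented: if c then evaluator 1 evaluates attribute 1 of everyone,
   else evaluator 2 does. *)
Definition score_seg (c b1 b2 : bool) (x : 'I_n -> R) (i : 'I_n) : R :=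
  total_score (if c then b1 else b2) x i.

Definition err_event d (T : measurableType d) (P : probability T R)
  (X : 'I_n -> {RV P >-> R}) (score : ('I_n -> R) -> 'I_n -> R) : set T :=
  [set t | ~ top1_correct (fun i => X i t) (score (fun i => X i t))].

(* Law of total probability over the independent discrete randomness
   (bias flags b1 b2 ~ Bernoulli(gamma), uniform split S with #|S| = n/2). *)
Definition err_hol d (T : measurableType d) (P : probability T R)
  (X : 'I_n -> {RV P >-> R}) : R :=
  \sum_(b1 : bool) \sum_(b2 : bool) \sum_(S : {set 'I_n} | #|S| == n./2)
    (wbias b1 * wbias b2 / ('C(n, n./2))%:R) * fine (P (err_event X (score_hol S b1 b2))).

(* bias flags as above, uniform choice c of which evaluator gets attribute 1 *)
Definition err_seg d (T : measurableType d) (P : probability T R)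
  (X : 'I_n -> {RV P >-> R}) : R :=
  \sum_(b1 : bool) \sum_(b2 : bool) \sum_(c : bool)
    (wbias b1 * wbias b2 / 2) * fine (P (err_event X (score_seg c b1 b2))).

End TwoEvaluators.

(* Main.v *)
Require Import Defs.
From HB Require Import structures.
From mathcomp Require Import all_boot all_order all_algebra.
From mathcomp Require Import all_classical all_reals all_analysis.
From mathcomp Require Import lra.
Import Order.TTheory GRing.Theory Num.Theory.
Local Open Scope classical_set_scope.
Local Open Scope ring_scope.
Set Implicit Arguments. Unset Strict Implicit.

Lemma pfin (R : realType) d (T : measurableType d) (P : probability T R) (A : set T) :
  measurable A -> P A = (fine (P A))%:E.
Proof. move=> mA; rewrite fineK //; exact: fin_num_measure. Qed.

Lemma pmono (R : realType) d (T : measurableType d) (P : probability T R) (A B : set T) :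
  measurable A -> measurable B -> A `<=` B -> fine (P A) <= fine (P B).
Proof.
move=> mA mB AB; rewrite -lee_fin -!pfin //.
by apply: le_measure => //; rewrite inE.
Qed.

Lemma psubmod (R : realType) d (T : measurableType d) (P : probability T R) (A B C D : set T) :
  measurable A -> measurable B -> measurable C -> measurable D ->
  C `<=` A `|` B -> D `<=` A `&` B ->
  fine (P C) + fine (P D) <= fine (P A) + fine (P B).
Proof.
move=> mA mB mC mD CAB DAB.
have mU : measurable (A `|` B) by exact: measurableU.
have mI : measurable (A `&` B) by exact: measurableI.
have E : fine (P (A `|` B)) = fine (P A) + fine (P B) - fine (P (A `&` B)).
  apply/EFin_inj; rewrite -pfin // measureUfinl //.
    by rewrite EFinB EFinD -!pfin.
  by rewrite ltey_eq fin_num_measure.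
have h1 := pmono P mC mU CAB.
have h2 := pmono P mD mI DAB.
lra.
Qed.

Lemma meas_lt (R : realType) d (T : measurableType d) (f g : T -> R) :
  measurable_fun setT f -> measurable_fun setT g -> measurable [set t | f t < g t].
Proof.
move=> mf mg.
have mt : measurable [set true] by [].
have := measurable_realfun.measurable_fun_ltr mf mg measurableT mt.
move=> H; suff -> : [set t | f t < g t] = [set: T] `&` (fun x => f x < g x) @^-1` [set true] by [].
by apply/seteqP; split => t /=; [move=> ->|case=> _ ->].
Qed.

Lemma meas_err (R : realType) n d (T : measurableType d) (P : probability T R)
  (X : 'I_n -> {RV P >-> R}) (sc : ('I_n -> R) -> 'I_n -> R) :
  (forall i, measurable_fun setT (fun t => sc (fun k => X k t) i)) ->
  measurable (err_event X sc).
Proof.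
move=> msc.
have -> : err_event X sc = ~` \bigcup_(i in [set: 'I_n]) \bigcap_(j in [set j | j != i])
   ([set t | X j t < X i t] `&` [set t | sc (fun k => X k t) j < sc (fun k => X k t) i]).
  apply/seteqP; split => t /=.
    move=> H [i _ Hi]; apply: H; exists i; split => j ji; by have [] := Hi j ji.
  move=> H [i [H1 H2]]; apply: H; exists i => // j ji; split; [exact: H1|exact: H2].
apply: measurableC; apply: fin_bigcup_measurable; first exact: finite_finset.
move=> i _; apply: fin_bigcap_measurable; first exact: finite_finset.
move=> j _; apply: measurableI; apply: meas_lt => //; exact: measurable_funPT.
Qed.

Lemma meas_total (R : realType) n (ID : {set 'I_n}) beta b d (T : measurableType d) (P : probability T R)
  (X : 'I_n -> {RV P >-> R}) i :
  measurable_fun setT (fun t => total_score ID beta b (fun k => X k t) i).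
Proof.
rewrite /total_score; case: (_ && _); apply: measurable_realfun.measurable_funD; try exact: measurable_funPT.
apply: measurable_realfun.measurable_funM; [exact: measurable_cst|exact: measurable_funPT].
Qed.

Lemma L0 (R : realType) n (ID : {set 'I_n}) (beta : R) (x s : 'I_n -> R) :
  top1_correct x s -> top1_correct x (total_score ID beta false x).
Proof.
case=> i [H1 H2]; exists i; split => // j ji; rewrite /total_score /=.
have := H1 j ji; lra.
Qed.

Lemma L1 (R : realType) n (ID S : {set 'I_n}) (beta : R) (x : 'I_n -> R) :
  0 <= beta ->
  top1_correct x (score_hol ID beta S true false x) ->
  top1_correct x (score_hol ID beta S false true x) ->
  top1_correct x (total_score ID beta true x).
Proof.
move=> b0 [i [Hx H1]] [i' [Hx' H2]].
have ii : i' = i.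
  apply/eqP; apply/negPn/negP => ne.
  have := Hx i' ne; have := Hx' i; rewrite eq_sym => /(_ ne); lra.
subst i'; exists i; split => // j ji.
have := H1 j ji; have := H2 j ji; have := Hx j ji.
rewrite /score_hol /total_score /=.
case: (i \in S); case: (j \in S); case: (i \in ID); case: (j \in ID) => /=; nra.
Qed.


Lemma cnt (R : realType) n :
  \sum_(S : {set 'I_n} | #|S| == n./2) (1:R) = ('C(n, n./2))%:R.
Proof.
have := sum1dep_card (fun S : {set 'I_n} => #|S| == n./2).
rewrite card_draws card_ord => <-.
by rewrite -sumrMnr.
Qed.

Unset Implicit Arguments. Set Strict Implicit.
Theorem theorem1 (R : realType) (n : nat) (ID : {set 'I_n}) (beta gamma : R)
  (d : measure_display) (T : measurableType d) (P : probability T R)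
  (X : 'I_n -> {RV P >-> R}) (D : probability R R) :
  (2 <= n)%N -> ~~ odd n -> #|ID| = n./2 ->
  0 <= beta -> beta < 1 -> 0 < gamma -> gamma < 1 ->
  continuous_nonneg_distribution D ->
  mutually_independent X -> has_law X D ->
  err_seg ID beta gamma X <= err_hol ID beta gamma X.
Proof.
move=> n2 _ _ b0 _ g0 g1 _ _ _.
set K : R := ('C(n, n./2))%:R.
have K0 : K != 0 by rewrite pnatr_eq0 -lt0n bin_gt0 leq_half_double; apply: leqW; rewrite -addnn leq_addl.
have sumS : forall c : R, \sum_(S : {set 'I_n} | #|S| == n./2) c = c * K.
  by move=> c; rewrite /K -cnt mulr_sumr; apply: eq_bigr => *; rewrite mulr1.
have hseg : forall c b1 b2, score_seg ID beta c b1 b2 = total_score ID beta (if c then b1 else b2) by [].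
have hdiag : forall S b, score_hol ID beta S b b = total_score ID beta b.
  by move=> S b; apply/funext => x; apply/funext => i; rewrite /score_hol if_same.
have mtot : forall b, measurable (err_event X (total_score ID beta b)).
  by move=> b; apply: meas_err => i; exact: meas_total.
have mhol : forall S b1 b2, measurable (err_event X (score_hol ID beta S b1 b2)).
  by move=> S b1 b2; apply: meas_err => i; exact: meas_total.
set eT := fine (P (err_event X (total_score ID beta true))).
set eF := fine (P (err_event X (total_score ID beta false))).
have key : forall S, eT + eF <= fine (P (err_event X (score_hol ID beta S true false)))
                               + fine (P (err_event X (score_hol ID beta S false true))).
  move=> S; apply: psubmod => //.
    rewrite /err_event => t /= H.
    case: (pselect (top1_correct (fun i => X i t) (score_hol ID beta S true false (fun i => X i t)))) => h1; last by left.
    case: (pselect (top1_correct (fun i => X i t) (score_hol ID beta S false true (fun i => X i t)))) => h2; last by right.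
    by exfalso; apply: H; exact: (L1 b0 h1 h2).
  rewrite /err_event => t /= H; split => h; apply: H; exact: L0 h.
rewrite /err_seg /err_hol !big_bool /= !hseg /=.
have dsum : forall b (c : R), \sum_(S : {set 'I_n} | #|S| == n./2) c * fine (P (err_event X (score_hol ID beta S b b))) = c * K * fine (P (err_event X (total_score ID beta b))).
  move=> b c; rewrite -sumS mulr_suml; apply: eq_bigr => S _; by rewrite hdiag.
rewrite !dsum -/eT -/eF.
set k := gamma * (1 - gamma) / K.
have hmix : gamma * (1 - gamma) * (eT + eF) <=
   \sum_(S : {set 'I_n} | #|S| == n./2) (gamma * (1 - gamma) / K) * fine (P (err_event X (score_hol ID beta S true false)))
 + \sum_(S : {set 'I_n} | #|S| == n./2) ((1 - gamma) * gamma / K) * fine (P (err_event X (score_hol ID beta S false true))).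
  rewrite -big_split /=.
  apply: le_trans (_ : \sum_(S : {set 'I_n} | #|S| == n./2) k * (eT + eF) <= _).
    by rewrite sumS /k [leRHS]mulrAC divfK.
  apply: ler_sum => S _; rewrite [(1 - gamma) * gamma]mulrC -/k -mulrDr.
  apply: ler_wpM2l; last exact: key.
  rewrite /k; apply: divr_ge0; last exact: ler0n.
  apply: mulr_ge0; lra.
rewrite -/K /k !divfK //.
lra.
Qed.
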